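(* Let $G$ be a finite simple graph, $\alpha=\alpha(G)$, $g_j$ the number of independent sets of $G$ of size $j$ ($1\le j\le \alpha$), and $g=\sum_{j=1}^{\alpha}(-1)^{j-1}g_j$. For $0\le s\le \alpha-1$ set $D_s=\sum_{j=s+1}^{\alpha}(-1)^{j-1-s}g_j\binom{j}{j-1-s}$. If $g=1$, then $\deg h_{R/I(G)}(t)=\alpha-d'-1$, where $d'=\min\{s: 0\le s\le\alpha-1,\ D_s\neq 0\}$.
   Context: An independent set of $G$ is a set of pairwise non-adjacent vertices; $\alpha(G)$ is the maximum size of one. For $G$ on vertices $x_1,\dots,x_n$, $R=k[x_1,\dots,x_n]$ over a field $k$, $I(G)=(x_ix_j:\{x_i,x_j\}\in E(G))$, and $h_{R/I(G)}(t)$ is the numerator of the Hilbert series of $R/I(G)$ written as a reduced fraction $h_{R/I(G)}(t)/(1-t)^{\dim R/I(G)}$. *)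

(* Defs.v *)
From HB Require Import structures.
From mathcomp Require Import all_boot all_order all_algebra.
Set Implicit Arguments. Unset Strict Implicit. Unset Printing Implicit Defensive.
Import Order.TTheory GRing.Theory Num.Theory.

Definition simple_graph (T : finType) (e : rel T) : Prop :=
  symmetric e /\ irreflexive e.

Definition independent (T : finType) (e : rel T) (A : {set T}) : bool :=
  [forall x in A, forall y in A, ~~ e x y].

Definition alpha (T : finType) (e : rel T) : nat :=
  \max_(A : {set T} | independent e A) #|A|.

Definition gcount (T : finType) (e : rel T) (j : nat) : nat :=
  #|[set A : {set T} | independent e A & #|A| == j]|.

Definition galt (T : finType) (e : rel T) : int :=
  (\sum_(1 <= j < (alpha e).+1) (-1) ^+ j.-1 * (gcount e j)%:Z)%R.

Definition Dcoef (T : finType) (e : rel T) (s : nat) : int :=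
  (\sum_(s.+1 <= j < (alpha e).+1)
      (-1) ^+ (j - 1 - s) * (gcount e j * 'C(j, j - 1 - s))%:Z)%R.

(* Hilbert function of R/I(G), R = k[x_v : v in T]: the degree-d part of
   R/I(G) has as k-basis the monomials of degree d not in the monomial ideal
   I(G), i.e. exponent vectors f with total degree d such that no edge {x,y}
   has both f x > 0 and f y > 0. (Independent of the field k.) *)
Definition hilbert_fun (T : finType) (e : rel T) (d : nat) : nat :=
  #|[set f : {ffun T -> 'I_d.+1} |
      (\sum_(x : T) (f x : nat) == d) &&
      [forall x, forall y, e x y ==> ((f x == 0 :> nat) || (f y == 0 :> nat))]]|.

(* (h, dim) is the reduced form of the Hilbert series:
   HS(t) = h(t)/(1-t)^dim as formal power series, i.e.
   (1-t)^dim * HS(t) = h(t) coefficientwise, and the fraction is reduced,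
   i.e. h(1) <> 0. *)
Definition hilbert_numerator (T : finType) (e : rel T) (h : {poly int})
    (dim : nat) : Prop :=
  (forall n : nat,
     (h`_n)%R = (\sum_(k < dim.+1 | (k <= n)%N)
               (-1) ^+ k * ('C(dim, k) * hilbert_fun e (n - k))%:Z)%R)
  /\ h.[1]%R != 0%R.

(* Main.v *)
Require Import Defs.
From HB Require Import structures.
From mathcomp Require Import all_boot all_order all_algebra.
From mathcomp Require Import ring zify.
Set Implicit Arguments. Unset Strict Implicit. Unset Printing Implicit Defensive.
Import Order.TTheory GRing.Theory Num.Theory.
Section Aux.
Local Open Scope ring_scope.

Definition eqm (N : nat) (p q : {poly int}) := forall i, (i < N)%N -> p`_i = q`_i.

Lemma eqm_refl N p : eqm N p p. Proof. by []. Qed.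
Lemma eqm_sym N p q : eqm N p q -> eqm N q p. Proof. by move=> H i Hi; rewrite H. Qed.
Lemma eqm_trans N p q r : eqm N p q -> eqm N q r -> eqm N p r.
Proof. by move=> H1 H2 i Hi; rewrite H1 // H2. Qed.
Lemma eqm_le N M p q : (N <= M)%N -> eqm M p q -> eqm N p q.
Proof. by move=> NM H i Hi; apply: H; apply: leq_trans NM. Qed.
Lemma eqmD N p q p' q' : eqm N p p' -> eqm N q q' -> eqm N (p + q) (p' + q').
Proof. by move=> H1 H2 i Hi; rewrite !coefD H1 // H2. Qed.
Lemma eqmM N p q p' q' : eqm N p p' -> eqm N q q' -> eqm N (p * q) (p' * q').
Proof.
move=> H1 H2 i Hi; rewrite !coefM; apply: eq_bigr => j _.
have Hj : (j < N)%N by apply: leq_ltn_trans Hi; rewrite -ltnS.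
have Hij : (i - j < N)%N by apply: leq_ltn_trans Hi; rewrite leq_subr.
by rewrite H1 // H2.
Qed.
Lemma eqmX N p q k : eqm N p q -> eqm N (p ^+ k) (q ^+ k).
Proof. move=> H; elim: k => [|k IH]; first exact: eqm_refl.
by rewrite !exprS; apply: eqmM. Qed.
Lemma eqmMn N p q k : eqm N p q -> eqm N (p *+ k) (q *+ k).
Proof. by move=> H i Hi; rewrite !coefMn H. Qed.
Lemma eqm_sum N n (F G : 'I_n -> {poly int}) :
  (forall j, eqm N (F j) (G j)) -> eqm N (\sum_(j < n) F j) (\sum_(j < n) G j).
Proof. by move=> H i Hi; rewrite !coef_sum; apply: eq_bigr => j _; rewrite H. Qed.
Lemma eqm_all p q : (forall N, eqm N p q) -> p = q.
Proof. by move=> H; apply/polyP => i; apply: (H i.+1). Qed.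

Lemma coef_1subX d i : ((1 - 'X : {poly int}) ^+ d)`_i = (-1) ^+ i * ('C(d, i))%:R.
Proof.
elim: d i => [|d IH] i.
  by rewrite expr0 coef1; case: i => [|i] //=; rewrite ?expr0 ?mulr1 // bin0n mulr0.
rewrite exprSr mulrBr mulr1 coefB coefMX IH.
case: i => [|i] /=; first by rewrite !bin0 subr0.
rewrite IH binS natrD exprS; ring.
Qed.

End Aux.
Section Graph.
Local Open Scope ring_scope.
Variables (T : finType) (e : rel T).

Definition Y (m : nat) : {poly int} := \sum_(k < m) 'X^(k.+1).

Lemma coefY m i : (Y m)`_i = ((0 < i) && (i <= m))%N%:R.
Proof.
elim: m => [|m IH]; first by rewrite /Y big_ord0 coef0; case: i.
rewrite /Y big_ord_recr /= coefD -/(Y m) IH coefXn.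
case: (ltngtP i m.+1) => H.
- rewrite /= addr0; rewrite ltnS in H; by rewrite H andbT.
- by rewrite /= (leqNgt i m) (ltnW H) andbF addr0.
- by rewrite /= H ltnn andbF add0r andbT.
Qed.

Lemma Y_eqm m N : (m <= N)%N -> eqm m.+1 (Y m) (Y N).
Proof.
move=> mN i Hi; rewrite !coefY; rewrite ltnS in Hi.
by rewrite Hi (leq_trans Hi mN).
Qed.

Lemma YX N : eqm N.+1 ((1 - 'X) * Y N) 'X.
Proof.
move=> i Hi; rewrite mulrBl mul1r coefB coefXM !coefY coefX ltnS in Hi *.
case: i Hi => [|[|i]] Hi //=.
- by rewrite Hi subr0.
- by rewrite Hi (ltnW Hi) subrr.
Qed.

Definition supp m (f : {ffun T -> 'I_m.+1}) : {set T} := [set x | (f x != 0 :> nat)].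

Lemma cond_indep m (f : {ffun T -> 'I_m.+1}) :
  [forall x, forall y, e x y ==> ((f x == 0 :> nat) || (f y == 0 :> nat))]
  = independent e (supp f).
Proof.
apply/idP/idP.
- move=> /forallP H; apply/forallP => x; apply/implyP => Hx.
  apply/forallP => y; apply/implyP => Hy.
  have /implyP Hi := forallP (H x) y.
  rewrite !inE in Hx Hy.
  apply/negP => Exy; have := Hi Exy; by rewrite (negbTE Hx) (negbTE Hy).
- move=> /forallP H; apply/forallP => x; apply/forallP => y; apply/implyP => Exy.
  case: (boolP (f x == 0 :> nat)) => //= Hx.
  apply/negPn/negP => Hy.
  have /implyP := H x; rewrite inE => /(_ Hx) /forallP /(_ y) /implyP.
  by rewrite inE => /(_ Hy); rewrite Exy.
Qed.

Lemma HF_sum m : (hilbert_fun e m)%:Z =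
  (\sum_(f : {ffun T -> 'I_m.+1} | independent e (supp f)) 'X^(\sum_x (f x : nat)))`_m.
Proof.
rewrite coef_sum /hilbert_fun -sum1_card -natz natr_sum big_mkcond [RHS]big_mkcond /=.
apply: eq_bigr => f _; rewrite inE cond_indep coefXn eq_sym.
by case: (independent _ _); rewrite ?andbT ?andbF //; case: (_ == _).
Qed.

Lemma inner m S : \sum_(f : {ffun T -> 'I_m.+1} | supp f == S) 'X^(\sum_x (f x : nat))
   = (Y m) ^+ #|S|.
Proof.
pose F := fun (x : T) (k : 'I_m.+1) =>
  if (k != 0 :> nat) == (x \in S) then 'X^k else (0 : {poly int}).
transitivity (\sum_(f : {ffun T -> 'I_m.+1}) \prod_x F x (f x)).
  rewrite big_mkcond; apply: eq_bigr => f _.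
  case: eqP => [Hs|neq].
    rewrite -prodrXr; apply: eq_bigr => x _; by rewrite /F -Hs inE eqxx.
  case: (pickP (fun x => (f x != 0 :> nat) != (x \in S))) => [x Hx | H].
    by rewrite (bigD1 x) //= /F (negbTE Hx) mul0r.
  exfalso; apply: neq; apply/setP => x; rewrite inE.
  by have := H x => /negbFE/eqP.
rewrite -bigA_distr_bigA -prodr_const [RHS]big_mkcond; apply: eq_bigr => x _.
rewrite /F big_ord_recl /=.
case: (x \in S).
  rewrite /= add0r /Y; apply: eq_bigr => i _; by rewrite /bump leq0n add1n.
by rewrite /= big1 ?addr0 ?expr0.
Qed.

Lemma alpha_ge S : independent e S -> (#|S| <= alpha e)%N.
Proof. by move=> HS; rewrite /alpha; exact: (@leq_bigmax_cond _ (fun A => independent e A) (fun A : {set T} => #|A|) S HS). Qed.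

Lemma grouping (F : nat -> {poly int}) :
  \sum_(S : {set T} | independent e S) F #|S|
  = \sum_(j < (alpha e).+1) F j *+ gcount e j.
Proof.
rewrite (partition_big (fun S : {set T} => (inord #|S| : 'I_(alpha e).+1)) xpredT) //=.
apply: eq_bigr => j _.
rewrite /gcount -sumr_const; apply: eq_big => [S|S].
  rewrite inE; case HS: (independent e S) => //=.
  by rewrite -val_eqE /= inordK // ltnS alpha_ge.
by move=> /andP [HS /eqP <-]; rewrite inordK // ltnS alpha_ge.
Qed.

Definition Zpoly m := \sum_(j < (alpha e).+1) (Y m)^+j *+ gcount e j.

Lemma HF_Z m : (hilbert_fun e m)%:Z = (Zpoly m)`_m.
Proof.
rewrite HF_sum (partition_big (@supp m) (independent e)) //=.
rewrite (eq_bigr (fun S : {set T} => Y m ^+ #|S|)); first by rewrite (grouping (fun j => Y m ^+ j)).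
move=> S HS; rewrite -(inner m S); apply: eq_bigl => f.
by case: eqP => [->|]; rewrite ?HS ?andbF.
Qed.

End Graph.
Section Main.
Local Open Scope ring_scope.
Variables (T : finType) (e : rel T).

Definition Pp : {poly int} :=
  \sum_(j < (alpha e).+1) ('X^j * (1 - 'X)^+(alpha e - j)) *+ gcount e j.
Definition HFp N : {poly int} := \poly_(i < N) ((hilbert_fun e i)%:Z).

Lemma Z_eqm m N : (m <= N)%N -> eqm m.+1 (Zpoly e m) (Zpoly e N).
Proof.
move=> mN; apply: eqm_sum => j; apply: eqmMn; apply: eqmX; exact: Y_eqm.
Qed.

Lemma HF_eqm N : eqm N (HFp N) (Zpoly e N).
Proof.
move=> i Hi; rewrite coef_poly Hi HF_Z.
exact: (Z_eqm (ltnW Hi) (ltnSn i)).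
Qed.

Lemma PZ N : eqm N.+1 ((1 - 'X)^+(alpha e) * Zpoly e N) Pp.
Proof.
rewrite /Zpoly mulr_sumr; apply: eqm_sum => j; rewrite mulrnAr; apply: eqmMn.
have Hj : (j <= alpha e)%N by rewrite -ltnS.
have -> : (1 - 'X : {poly int})^+(alpha e) = (1-'X)^+(alpha e - j) * (1-'X)^+j
  by rewrite -exprD subnK.
rewrite -mulrA -exprMn [X in eqm _ _ X]mulrC.
apply: eqmM; [exact: eqm_refl | apply: eqmX; exact: YX].
Qed.

Lemma hcoef h dim : hilbert_numerator e h dim ->
  forall n N, (n < N)%N -> h`_n = ((1 - 'X)^+dim * HFp N)`_n.
Proof.
move=> [Hh _] n N nN; rewrite Hh coefM.
rewrite [RHS](eq_bigr (fun j : 'I_n.+1 =>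
   (-1)^+j * ('C(dim, j) * hilbert_fun e (n - j))%:Z)); last first.
  move=> j _; rewrite coef_1subX coef_poly (leq_ltn_trans (leq_subr j n) nN).
  by rewrite -mulrA PoszM natz.
pose G := fun k : nat => (-1)^+k * ('C(dim, k) * hilbert_fun e (n - k))%:Z.
rewrite (big_ord_widen_cond (n + dim).+1 (fun k => (k <= n)%N) G) ?ltnS ?leq_addl //.
rewrite (big_ord_widen (n + dim).+1 G) ?ltnS ?leq_addr //.
rewrite big_mkcond [RHS]big_mkcond; apply: eq_bigr => i _.
rewrite !ltnS; case: (leqP i n) => Hin /=; last by [].
case: (leqP i dim) => Hid //.
by rewrite /G bin_small // mul0n mulr0.
Qed.

Lemma indep0 : independent e set0.
Proof. by apply/forallP => x; rewrite inE. Qed.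

Lemma gcount0 : gcount e 0 = 1%N.
Proof.
rewrite /gcount (_ : [set _ | _] = [set set0]) ?cards1 //.
apply/setP => S; rewrite !inE cards_eq0.
by case: eqP => [->|]; rewrite ?indep0 ?andbF.
Qed.

Lemma gcount_alpha : (0 < gcount e (alpha e))%N.
Proof.
have H0 : (0 < #|[pred A : {set T} | independent e A]|)%N.
  by apply/card_gt0P; exists set0; rewrite inE indep0.
have [S HS Hmax] := eq_bigmax_cond (fun S : {set T} => #|S|) H0.
rewrite inE in HS.
have Ha : alpha e = #|S| by exact: Hmax.
apply/card_gt0P; exists S; by rewrite inE HS Ha eqxx.
Qed.

Lemma P1 : Pp.[1] = (gcount e (alpha e))%:R.
Proof.
rewrite /Pp horner_sum big_ord_recr /= big1 ?add0r.
  by rewrite hornerMn hornerM horner_exp !hornerE subnn expr0 mulr1 expr1n.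
move=> j _; rewrite hornerMn hornerM horner_exp !hornerE subrr expr0n.
have : (alpha e - j)%N != 0%N by rewrite subn_eq0 -ltnNge.
by move/negbTE => ->; rewrite mulr0 mul0rn.
Qed.

End Main.
Section Main2.
Local Open Scope ring_scope.
Variables (T : finType) (e : rel T).

Definition Rp : {poly int} :=
  \sum_(j < (alpha e).+1) ((1 - 'X)^+j * 'X^(alpha e - j)) *+ gcount e j.

Lemma comp_exp (p q : {poly int}) n : (p ^+ n) \Po q = (p \Po q) ^+ n.
Proof.
elim: n => [|n IH]; first by rewrite !expr0 -polyC1 comp_polyC.
by rewrite !exprS comp_polyM IH.
Qed.

Lemma comp_Mn (p q : {poly int}) n : (p *+ n) \Po q = (p \Po q) *+ n.
Proof.
elim: n => [|n IH]; first by rewrite !mulr0n comp_poly0.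
by rewrite !mulrS comp_polyD IH.
Qed.

Lemma PcompR : Pp e \Po (1 - 'X) = Rp.
Proof.
rewrite /Pp /Rp rmorph_sum; apply: eq_bigr => j _.
rewrite /= comp_Mn comp_polyM !comp_exp comp_polyB comp_polyX -polyC1 comp_polyC polyC1.
have -> : (1 - (1 - 'X)) = 'X :> {poly int} by ring.
by rewrite mulrC.
Qed.

Lemma size_PR : size (Pp e) = size Rp.
Proof.
rewrite -PcompR size_comp_poly2 //.
by rewrite -opprB size_opp -polyC1 size_XsubC.
Qed.

Lemma coefR m : Rp`_m = \sum_(j < (alpha e).+1)
  (if (m < alpha e - j)%N then 0 else (-1)^+(m - (alpha e - j)) * ('C(j, m - (alpha e - j)))%:R)
     *+ gcount e j.
Proof.
rewrite /Rp coef_sum; apply: eq_bigr => j _.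
by rewrite coefMn coefMXn coef_1subX.
Qed.

Lemma R_big m : (alpha e < m)%N -> Rp`_m = 0.
Proof.
move=> Hm; rewrite coefR big1 // => j _.
have Hj : (j <= alpha e)%N by rewrite -ltnS.
have -> : (m < alpha e - j)%N = false by apply/negbTE; rewrite -leqNgt; lia.
by rewrite bin_small ?mulr0 ?mul0rn //; lia.
Qed.

Lemma R_top : galt e = 1 -> Rp`_(alpha e) = 0.
Proof.
move=> Hg; rewrite coefR.
rewrite (eq_bigr (fun j : 'I_(alpha e).+1 => (-1)^+j *+ gcount e j)); last first.
  move=> j _; have Hj : (j <= alpha e)%N by rewrite -ltnS.
  have -> : (alpha e < alpha e - j)%N = false by apply/negbTE; rewrite -leqNgt leq_subr.
  by rewrite subKn // binn mulr1.
rewrite big_ord_recl /= expr0 gcount0.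
move: Hg; rewrite /galt big_add1 /= big_mkord => Hg.
have -> : \sum_(i < alpha e) (-1) ^+ (bump 0 i) *+ gcount e (bump 0 i)
   = - \sum_(i < alpha e) (-1) ^+ i * (gcount e i.+1)%:Z.
  rewrite -sumrN; apply: eq_bigr => i _.
  by rewrite /bump leq0n add1n exprS mulN1r mulNrn -mulr_natr natz.
by rewrite Hg subrr.
Qed.

Lemma R_D s : (s < alpha e)%N -> Rp`_(alpha e - s.+1) = Dcoef e s.
Proof.
move=> Hs; rewrite coefR /Dcoef (big_nat_widenl _ 0) // big_mkord.
rewrite [RHS]big_mkcond; apply: eq_bigr => j _.
have Hj : (j <= alpha e)%N by rewrite -ltnS.
case: (ltnP s j) => Hsj /=.
  have -> : (alpha e - s.+1 < alpha e - j)%N = false by apply/negbTE; rewrite -leqNgt; lia.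
  have -> : (alpha e - s.+1 - (alpha e - j))%N = (j - 1 - s)%N by lia.
  rewrite -mulr_natr PoszM -!natz; ring.
have -> : (alpha e - s.+1 < alpha e - j)%N = true by lia.
by rewrite mul0rn.
Qed.

Lemma main_lemma (h : {poly int}) (dim d' : nat) :
  galt e = 1 ->
  (d' < alpha e)%N ->
  Dcoef e d' != 0 ->
  (forall s : nat, (s < d')%N -> Dcoef e s = 0) ->
  hilbert_numerator e h dim ->
  ((size h).-1 = alpha e - d' - 1)%N.
Proof.
move=> Hg Hd' HD HDs Hh.
have Hh' := hcoef Hh.
have hP : h = Pp e.
  case: (leqP (alpha e) dim) => Hda.
    have E : h = (1 - 'X)^+(dim - alpha e) * Pp e.
      apply/polyP => n; rewrite (Hh' n n.+1 (ltnSn n)).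
      have -> : (1 - 'X : {poly int})^+dim = (1-'X)^+(dim - alpha e) * (1-'X)^+(alpha e)
        by rewrite -exprD subnK.
      rewrite -mulrA.
      have K : eqm n.+1 ((1-'X)^+(dim - alpha e) * ((1-'X)^+(alpha e) * HFp e n.+1))
                        ((1-'X)^+(dim - alpha e) * Pp e).
        apply: eqmM; first exact: eqm_refl.
        refine (eqm_trans (eqmM (@eqm_refl _ _) (HF_eqm e (N:=n.+1))) _).
        exact: eqm_le (leqnSn _) (PZ e (N:=n.+1)).
      exact: (K n (ltnSn n)).
    case E0: (dim - alpha e)%N => [|k].
      by rewrite E E0 expr0 mul1r.
    exfalso; move: Hh => [_ H1]; move: H1.
    by rewrite E E0 hornerM horner_exp !hornerE subrr expr0n /= mul0r eqxx.
  exfalso.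
  have E : (1 - 'X)^+(alpha e - dim) * h = Pp e.
    apply: eqm_all => N.
    have K1 : eqm N h ((1 - 'X)^+dim * HFp e N) by move=> i Hi; exact: Hh'.
    refine (eqm_trans (eqmM (@eqm_refl _ _) K1) _).
    rewrite mulrA -exprD subnK; last exact: ltnW.
    refine (eqm_trans (eqmM (@eqm_refl _ _) (HF_eqm e (N:=N))) _).
    exact: eqm_le (leqnSn _) (PZ e (N:=N)).
  have := gcount_alpha e; rewrite lt0n => /negP; apply.
  have := congr1 (fun p => p.[1]) E; rewrite /= P1 hornerM horner_exp !hornerE subrr.
  rewrite expr0n.
  have -> : (alpha e - dim == 0)%N = false by apply/negbTE; rewrite subn_eq0 -ltnNge.
  by rewrite mul0r => /eqP; rewrite eq_sym pnatr_eq0.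
have HsR : size Rp = (alpha e - d')%N.
  apply/eqP; rewrite eqn_leq; apply/andP; split.
    apply/leq_sizeP => m Hm.
    case: (ltngtP (alpha e) m) => Ham.
    - exact: R_big.
    - have -> : m = (alpha e - (alpha e - m.+1).+1)%N by lia.
      rewrite R_D; last by lia.
      apply: HDs; lia.
    - by rewrite -Ham R_top.
  have Ex : (alpha e - d')%N = (alpha e - d'.+1).+1 by lia.
  rewrite Ex ltnNge; apply/negP => /leq_sizeP /(_ _ (leqnn _)).
  by rewrite R_D // => /eqP; rewrite (negbTE HD).
rewrite hP size_PR HsR; lia.
Qed.
End Main2.


Theorem corollary3p4 (T : finType) (e : rel T) (h : {poly int}) (dim d' : nat) :
  simple_graph e ->
  galt e = 1%R ->
  (d' < alpha e)%N ->
  Dcoef e d' != 0%R ->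
  (forall s : nat, (s < d')%N -> Dcoef e s = 0%R) ->
  hilbert_numerator e h dim ->
  (size h).-1 = (alpha e - d' - 1)%N.
Proof.
move=> _ Hg Hd' HD HDs Hh.
exact: (main_lemma Hg Hd' HD HDs Hh).
Qed.
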